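(* Every totally cyclic directed graph $\vec G$ (without loops and without parallel or antiparallel edges) whose underlying simple graph is three-edge-connected can be twisted, i.e. there exist a partial order $\prec$ on its edge set and a set $A$ such that $(\vec G,G,\prec,A)$ is a twisted graph.
   Context: Signed sets on a finite set $E$: pairs $X=(X^+,X^-)$ of disjoint subsets, $X(e)=+1,-1,0$ according as $e\in X^+$, $e\in X^-$, or neither; support $\underline X=X^+\cup X^-$; $-X=(X^-,X^+)$. Signed sets $X,Y$ are conformal if there is no $e$ with $X(e)=-Y(e)\neq0$; the composition is $(X\circ Y)(e)=X(e)$ if $X(e)\ne0$ and $Y(e)$ otherwise. For a total order $<$ on $E$, $\mathcal C(<)=\{(\{e_1,e_3\},\{e_2\}),(\{e_2\},\{e_1,e_3\}):e_1<e_2<e_3\}$, the signed circuits of the rank 2 oriented matroid $\mathcal M(<)$; its vectors are compositions of families of pairwise conformal members of $\mathcal C(<)$. For a partial order $\prec$ on $E$, $\mathcal C(\prec)$ is the intersection of $\mathcal C(<)$ over all total orders $<$ extending $\prec$. Let $\vec G=(V,\vec E)$ be a directed graph (no loops, no parallel or antiparallel edges) with underlying simple graph $G=(V,E)$, edges of $G$ and $\vec G$ identified. The circuits of the dual graphic oriented matroid $\mathcal M^*(\vec G)$ are the signed minimal cuts $\big(\{(u,w):u\in S,w\notin S\},\{(u,w):w\in S,u\notin S\}\big)$, $S\subset V$ with $S$ and $V\setminus S$ inducing connected subgraphs; a strong map $\mathcal M^*(\vec G)\to\mathcal M(<)$ means every such signed cut is a vector of $\mathcal M(<)$. For $v\in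 V$ let $C^*_v=(\{(u,v)\in\vec E\},\{(v,u)\in\vec E\})$. A twisted graph $T=(\vec G,G,\prec,A)$ consists of such $\vec G$, a partial order $\prec$ on $E$ and a set $A$ with: (1) $G$ is three-edge-connected; (2) $A\subset\mathcal C(\prec)$; (3) for every total order $<$ extending $\prec$ there is a strong map $\mathcal M^*(\vec G)\to\mathcal M(<)$; (4) $A$ can be partitioned as $\{A_v:v\in V\}$ such that for each $v$ the members of $A_v$ are pairwise conformal and their composition is $C^*_v$. A directed graph is totally cyclic if every edge lies in a directed cycle. *)

(* Defs.v *)
From mathcomp Require Import all_boot.
Set Implicit Arguments. Unset Strict Implicit. Unset Printing Implicit Defensive.

Section Defs.
Variable V : finType.

Definition no_loops (d : rel V) : Prop := forall u, ~~ d u u.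
Definition no_antiparallel (d : rel V) : Prop := forall u v, d u v -> ~~ d v u.

(* Edges of the directed graph (identified with edges of the underlying graph). *)
Definition Edge (d : rel V) := {p : V * V | d p.1 p.2}.

(* Signed sets on a finite type E: (X^+, X^-). *)
Definition sset (E : finType) := ({set E} * {set E})%type.

Definition conformal (E : finType) (X Y : sset E) : bool :=
  [disjoint X.1 & Y.2] && [disjoint X.2 & Y.1].

Definition scomp (E : finType) (X Y : sset E) : sset E :=
  (X.1 :|: (Y.1 :\: X.2), X.2 :|: (Y.2 :\: X.1)).

Definition scomp_seq (E : finType) (s : seq (sset E)) : sset E :=
  foldr (@scomp E) (set0, set0) s.

Definition strict_total (E : finType) (lt : rel E) : Prop :=
  irreflexive lt /\ transitive lt /\ (forall x y, x != y -> lt x y || lt y x).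

Definition strict_partial (E : finType) (prec : rel E) : Prop :=
  irreflexive prec /\ transitive prec.

Definition extends (E : finType) (prec lt : rel E) : Prop :=
  forall x y, prec x y -> lt x y.

(* C(<) : signed circuits of the rank 2 oriented matroid M(<) *)
Definition circ_tot (E : finType) (lt : rel E) (X : sset E) : Prop :=
  exists e1 e2 e3, [/\ lt e1 e2, lt e2 e3 &
    (X = ([set e1; e3], [set e2]) \/ X = ([set e2], [set e1; e3]))].

Definition vector_tot (E : finType) (lt : rel E) (X : sset E) : Prop :=
  exists s : seq (sset E),
    [/\ forall Y, Y \in s -> circ_tot lt Y,
        forall Y Z, Y \in s -> Z \in s -> conformal Y Z &
        X = scomp_seq s].

Definition circ_part (E : finType) (prec : rel E) (X : sset E) : Prop :=
  forall lt : rel E, strict_total lt -> extends prec lt -> circ_tot lt X.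

Definition adj_minus (d : rel V) (F : {set Edge d}) : rel V :=
  fun u v => [exists e : Edge d,
    (e \notin F) && ((val e == (u, v)) || (val e == (v, u)))].

Definition adj (d : rel V) : rel V := adj_minus (set0 : {set Edge d}).

Definition three_edge_connected (d : rel V) : Prop :=
  forall F : {set Edge d}, #|F| <= 2 -> forall u v, connect (adj_minus F) u v.

Definition totally_cyclic (d : rel V) : Prop :=
  forall u v, d u v -> connect d v u.

Definition induces_connected (d : rel V) (S : {set V}) : Prop :=
  S != set0 /\
  forall u v, u \in S -> v \in S ->
    connect [rel x y | [&& x \in S, y \in S & adj d x y]] u v.

Definition signed_cut (d : rel V) (S : {set V}) : sset (Edge d) :=
  ([set e : Edge d | ((val e).1 \in S) && ((val e).2 \notin S)],
   [set e : Edge d | ((val e).2 \in S) && ((val e).1 \notin S)]).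

Definition cocircuit (d : rel V) (X : sset (Edge d)) : Prop :=
  exists S : {set V}, [/\ induces_connected d S, induces_connected d (~: S) &
                          X = @signed_cut d S].

Definition strong_map (d : rel V) (lt : rel (Edge d)) : Prop :=
  forall X, @cocircuit d X -> vector_tot lt X.

Definition Cstar (d : rel V) (v : V) : sset (Edge d) :=
  ([set e : Edge d | (val e).2 == v], [set e : Edge d | (val e).1 == v]).

Definition twisted (d : rel V) (prec : rel (Edge d)) (A : {set sset (Edge d)}) : Prop :=
  [/\ three_edge_connected d,
      forall X, X \in A -> circ_part prec X,
      forall lt : rel (Edge d), strict_total lt -> extends prec lt -> @strong_map d lt &
      exists P : V -> {set sset (Edge d)},
        [/\ A = \bigcup_(v : V) P v,
            forall u v, u != v -> [disjoint P u & P v],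
            forall v X Y, X \in P v -> Y \in P v -> conformal X Y &
            forall v, scomp_seq (enum (P v)) = @Cstar d v]].

End Defs.

Arguments twisted {V} d prec A.
Arguments strong_map {V} d lt.
Arguments cocircuit {V} d X.
Arguments Cstar {V} d v.
Arguments signed_cut {V} d S.

(* Main.v *)
Require Import Defs.
From mathcomp Require Import all_boot all_order all_algebra.
From mathcomp Require Import zify ring lra.
Set Implicit Arguments. Unset Strict Implicit. Unset Printing Implicit Defensive.
Import Order.TTheory GRing.Theory Num.Theory.

Section Proof.
Variable V : finType.
Variable d : rel V.
Hypothesis nl : no_loops d.
Hypothesis na : no_antiparallel d.

Local Notation E := (Edge d).
Local Open Scope ring_scope.

Definition chi (S : {set V}) (e : E) : int :=
  (nat_of_bool ((val e).1 \in S))%:Z - (nat_of_bool ((val e).2 \in S))%:Z.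

Definition balanced (h : E -> int) := forall S, \sum_(e : E) chi S e * h e = 0.

Definition stp (x y : V) (e : E) : int :=
  (nat_of_bool (val e == (x, y)))%:Z - (nat_of_bool (val e == (y, x)))%:Z.

Fixpoint wh (x : V) (p : seq V) (e : E) : int :=
  match p with [::] => 0 | y :: p' => stp x y e + wh y p' e end.

Lemma sum_val_eq (f : E -> int) (e0 : E) :
  \sum_(e : E) f e * (nat_of_bool (val e == val e0))%:Z = f e0.
Proof.
rewrite (bigD1 e0) //= eqxx mulr1 big1 ?addr0 // => e He.
by rewrite (inj_eq val_inj) (negbTE He) mulr0.
Qed.

Lemma sum_val_none (f : E -> int) (p : V * V) : ~~ d p.1 p.2 ->
  \sum_(e : E) f e * (nat_of_bool (val e == p))%:Z = 0.
Proof.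
move=> Hp; rewrite big1 // => e _.
case: eqP => [He|]; last by rewrite mulr0.
by move: (valP e) Hp; rewrite He => ->.
Qed.

Lemma sum_stp (F : {set E}) x y S : adj_minus F x y ->
  \sum_(e : E) chi S e * stp x y e =
  (nat_of_bool (x \in S))%:Z - (nat_of_bool (y \in S))%:Z.
Proof.
move=> /existsP [e0 /andP [_ He0]].
under eq_bigr => e _ do rewrite /stp mulrBr.
rewrite sumrB.
case/orP: He0 => /eqP He0.
- have dxy : d x y by move: (valP e0); rewrite He0.
  have ndyx : ~~ d (y, x).1 (y, x).2 by apply: na.
  rewrite -He0 sum_val_eq sum_val_none // subr0 /chi He0 //.
- have dyx : d y x by move: (valP e0); rewrite He0.
  have ndxy : ~~ d (x, y).1 (x, y).2 by apply: na.
  rewrite -He0 sum_val_eq sum_val_none // sub0r /chi He0 /=.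
  by rewrite opprB.
Qed.

Lemma adj_minus_adj (F : {set E}) x y : adj_minus F x y -> adj d x y.
Proof.
move=> /existsP [e /andP [_ He]]; apply/existsP; exists e.
by rewrite in_set0.
Qed.

Lemma sum_wh x p S : path (adj d) x p ->
  \sum_(e : E) chi S e * wh x p e =
  (nat_of_bool (x \in S))%:Z - (nat_of_bool (last x p \in S))%:Z.
Proof.
elim: p x => [|y p IH] x /=.
  by move=> _; rewrite big1 ?subrr // => e _; rewrite mulr0.
move=> /andP [Hxy Hp].
under eq_bigr => e _ do rewrite mulrDr.
rewrite big_split /= (sum_stp S Hxy) IH //.
by rewrite addrA subrK.
Qed.

Lemma balanced_closed x p : path (adj d) x p -> last x p = x -> balanced (wh x p).
Proof. by move=> Hp Hl S; rewrite sum_wh // Hl subrr. Qed.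

Lemma balancedD h1 h2 : balanced h1 -> balanced h2 -> balanced (fun e => h1 e + h2 e).
Proof.
move=> B1 B2 S; under eq_bigr => e _ do rewrite mulrDr.
by rewrite big_split /= B1 B2 addr0.
Qed.

Lemma balancedZ (c : int) h : balanced h -> balanced (fun e => c * h e).
Proof.
move=> B S; under eq_bigr => e _ do rewrite mulrCA.
by rewrite -mulr_sumr B mulr0.
Qed.

Lemma balanced0 : balanced (fun _ => 0).
Proof. by move=> S; rewrite big1 // => e _; rewrite mulr0. Qed.


Lemma wh_ge0 x p : path d x p -> forall e, 0 <= wh x p e.
Proof.
elim: p x => [|y p IH] x //= /andP [Hxy Hp] e.
apply: addr_ge0; last exact: IH.
rewrite /stp; case: (eqVneq (val e) (y, x)) => [He|_].
  by move: (valP e) (na Hxy); rewrite He => ->.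
by rewrite subr0.
Qed.

Lemma d_adj x y : d x y -> adj d x y.
Proof.
move=> Hxy; apply/existsP; exists (exist (fun p : V * V => d p.1 p.2) (x, y) Hxy).
by rewrite in_set0 /= eqxx.
Qed.

Lemma cyc_edge (tc : totally_cyclic d) (e0 : E) :
  exists h, [/\ balanced h, forall e, 0 <= h e & 1 <= h e0].
Proof.
case: e0 => [[u v] /= Huv].
have /connectP [p Hp Hl] := tc u v Huv.
exists (wh u (v :: p)); split.
- apply: balanced_closed => //=.
  by rewrite (d_adj Huv) /= (sub_path (@d_adj) Hp).
- by apply: wh_ge0; rewrite /= Huv.
- rewrite /= /stp /= eqxx /=.
  have -> : ((u, v) == (v, u)) = false.
    by apply/negbTE/eqP => -[e1 _]; move: Huv; rewrite e1 => H; move: (nl v); rewrite H.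
  rewrite subr0; have := wh_ge0 Hp (exist _ (u, v) Huv); lia.
Qed.

Lemma exists_w (tc : totally_cyclic d) :
  exists w, balanced w /\ forall e, 0 < w e.
Proof.
suff: forall l : seq E, exists h, [/\ balanced h, forall e, 0 <= h e & forall e, e \in l -> 1 <= h e].
  case/(_ (enum [set: E])) => h [Hb H0 H1]; exists h; split=> // e.
  by have := H1 e; rewrite mem_enum in_setT => /(_ isT); lia.
elim=> [|e0 l [h [Hb H0 H1]]].
  by exists (fun _ => 0); split=> //; apply: balanced0.
have [h0 [Hb0 H00 H01]] := cyc_edge tc e0.
exists (fun e => h e + h0 e); split.
- exact: balancedD.
- by move=> e; apply: addr_ge0.
- move=> e; rewrite in_cons => /orP [/eqP ->|He].
    by have := H0 e0; lia.
  by have := H1 e He; have := H00 e; lia.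
Qed.

Lemma wh_zero (F : {set E}) x p e : path (adj_minus F) x p -> e \in F -> wh x p e = 0.
Proof.
move=> + HeF; elim: p x => [|y p IH] x //= /andP [Hxy Hp].
rewrite IH // addr0.
case/existsP: Hxy => e' /andP [He'F He'].
have Hne : e != e' by apply: contraNneq He'F => <-.
rewrite /stp.
have N1 : (val e == (x, y)) = false.
  apply/negbTE/eqP => Hv; case/orP: He' => /eqP Hv'.
    by move/negP: Hne; apply; apply/eqP/val_inj; rewrite Hv Hv'.
  by move: (valP e) (valP e'); rewrite Hv Hv' /= => H1 H2; move: (na H1); rewrite H2.
have N2 : (val e == (y, x)) = false.
  apply/negbTE/eqP => Hv; case/orP: He' => /eqP Hv'.
    by move: (valP e) (valP e'); rewrite Hv Hv' /= => H1 H2; move: (na H1); rewrite H2.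
  by move/negP: Hne; apply; apply/eqP/val_inj; rewrite Hv Hv'.
by rewrite N1 N2 subrr.
Qed.

Lemma pair_h (tec : three_edge_connected d) (e f : E) : e != f ->
  exists h, [/\ balanced h, h e = 1 & h f = 0].
Proof.
move=> Hef.
have HF : (#|[set e; f]| <= 2)%N by rewrite cards2 Hef.
case Hev: (val e) => [u v].
have /connectP [p Hp Hl] := tec _ HF v u.
have eF : e \in [set e; f] by rewrite !inE eqxx.
have fF : f \in [set e; f] by rewrite !inE eqxx orbT.
have Huv' : d u v by move: (valP e); rewrite Hev.
exists (wh u (v :: p)); split.
- apply: balanced_closed => //=.
  by rewrite (d_adj Huv') /= (sub_path (@adj_minus_adj _) Hp).
- rewrite /= (wh_zero Hp eF) addr0 /stp Hev eqxx /=.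
  have -> : ((u, v) == (v, u)) = false.
    by apply/negbTE/eqP => -[e1 _]; move: Huv'; rewrite e1 => H; move: (nl v); rewrite H.
  by rewrite subr0.
- rewrite /= (wh_zero Hp fF) addr0 /stp.
  have -> : (val f == (u, v)) = false.
    by apply/negbTE/eqP => Hv; move/negP: Hef; apply; apply/eqP/val_inj; rewrite Hv Hev.
  have -> : (val f == (v, u)) = false.
    by apply/negbTE/eqP => Hv; move: (valP f) (na Huv'); rewrite Hv /= => ->.
  by rewrite subrr.
Qed.


Definition Dq (w g : E -> int) (q : E * E) : int := g q.1 * w q.2 - g q.2 * w q.1.

Lemma combine_step (w g h : E -> int) : balanced g -> balanced h ->
  exists g', balanced g' /\ forall q, (Dq w g q != 0) || (Dq w h q != 0) -> Dq w g' q != 0.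
Proof.
move=> Bg Bh.
pose s := \sum_(q : E * E) Dq w h q * Dq w h q.
pose N := 1 + s.
exists (fun e => N * g e + h e); split.
  by apply: balancedD => //; apply: balancedZ.
move=> q Hq.
have -> : Dq w (fun e => N * g e + h e) q = N * Dq w g q + Dq w h q.
  by rewrite /Dq; ring.
have Hs : Dq w h q * Dq w h q <= s.
  rewrite /s (bigD1 q) //= lerDl; apply: sumr_ge0 => i _; exact: mulr_ge0_le0 || nia.
case: (eqVneq (Dq w g q) 0) => [Ha0|Ha].
  by rewrite Ha0 mulr0 add0r; move: Hq; rewrite Ha0 eqxx.
move: Ha; set a := Dq w g q; set b := Dq w h q => Ha.
move/eqP: Ha => Ha. apply/eqP=> H.
have Ha2 : 1 <= a * a by nia.
have Hb' : b = - (N * a) by lia.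
have : b * b = (N * N) * (a * a) by rewrite Hb'; ring.
have : 0 <= s by nia.
rewrite /N in H Hb'; nia.
Qed.

Lemma combine (w : E -> int) (l : seq (E * E)) :
  (forall q, q \in l -> exists h, balanced h /\ Dq w h q != 0) ->
  exists g, balanced g /\ forall q, q \in l -> Dq w g q != 0.
Proof.
elim: l => [|q l IH] Hl.
  by exists (fun _ => 0); split=> //; apply: balanced0.
have [g [Bg Hg]] : exists g, balanced g /\ forall q, q \in l -> Dq w g q != 0.
  by apply: IH => q' Hq'; apply: Hl; rewrite in_cons Hq' orbT.
have [h [Bh Hh]] := Hl q (mem_head _ _).
have [g' [Bg' Hg']] := combine_step w Bg Bh.
exists g'; split=> // q'; rewrite in_cons => /orP [/eqP ->|Hq'].
  by apply: Hg'; rewrite Hh orbT.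
by apply: Hg'; rewrite Hg.
Qed.

Lemma generic (tec : three_edge_connected d) (w : E -> int) : (forall e, 0 < w e) ->
  exists g, balanced g /\ forall e f, e != f -> g e * w f != g f * w e.
Proof.
move=> Hw.
have Hl : forall q, q \in [seq q <- enum [set: E * E] | q.1 != q.2] ->
    exists h, balanced h /\ Dq w h q != 0.
  move=> [e f]; rewrite mem_filter /= => /andP [Hef _].
  have [h [Bh He Hf]] := pair_h tec Hef.
  exists h; split=> //; rewrite /Dq /= He Hf mul0r subr0 mul1r.
  by have := Hw f; lia.
have [g [Bg Hg]] := combine Hl.
exists g; split=> // e f Hef.
have := Hg (e, f); rewrite mem_filter mem_enum in_setT Hef /Dq /= => /(_ isT).
by rewrite subr_eq0.
Qed.


Section Order.
Variables w g : E -> int.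
Hypotheses (Bw : balanced w) (Bg : balanced g) (Hw : forall e, 0 < w e)
  (Hgen : forall e f, e != f -> g e * w f != g f * w e).

Definition ltE : rel E := fun e f => g e * w f < g f * w e.

Lemma ltE_irr e : ltE e e = false.
Proof. by rewrite /ltE ltxx. Qed.

Lemma ltE_trans : transitive ltE.
Proof.
move=> b a c; rewrite /ltE => H1 H2.
have := Hw a; have := Hw b; have := Hw c => Hc Hb Ha.
have H3 : g a * w b * w c < g b * w a * w c by rewrite ltr_pM2r.
have H4 : g b * w c * w a < g c * w b * w a by rewrite ltr_pM2r.
rewrite -(ltr_pM2r Hb).
have H5 : g a * w b * w c < g c * w b * w a by apply: lt_trans H3 _; rewrite mulrAC.
have -> : g a * w c * w b = g a * w b * w c by ring.
have -> : g c * w a * w b = g c * w b * w a by ring.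
exact: H5.
Qed.

Lemma ltE_total e f : e != f -> ltE e f || ltE f e.
Proof.
move=> /Hgen; rewrite /ltE => H.
by case: (ltgtP (g e * w f) (g f * w e)) H => // ->; rewrite eqxx.
Qed.

Definition pos S := (signed_cut d S).1.
Definition neg S := (signed_cut d S).2.

Lemma pos_neg_disj S e : e \in pos S -> e \in neg S -> False.
Proof. by rewrite /pos /neg /signed_cut !inE => /andP [-> _] /andP [_]. Qed.

Lemma pos_compl S : pos (~: S) = neg S.
Proof. by apply/setP => e; rewrite /pos /neg /signed_cut !inE negbK andbC. Qed.

Lemma neg_compl S : neg (~: S) = pos S.
Proof. by apply/setP => e; rewrite /pos /neg /signed_cut !inE negbK andbC. Qed.

Lemma chi_cut S e :
  chi S e = (nat_of_bool (e \in pos S))%:Z - (nat_of_bool (e \in neg S))%:Z.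
Proof.
rewrite /chi /pos /neg /signed_cut !inE.
by case: ((val e).1 \in S); case: ((val e).2 \in S).
Qed.

Lemma sum_ind (A : {set E}) (h : E -> int) :
  \sum_(e : E) (nat_of_bool (e \in A))%:Z * h e = \sum_(e in A) h e.
Proof.
rewrite [RHS]big_mkcond; apply: eq_bigr => e _.
by case: (e \in A); rewrite ?mul1r ?mul0r.
Qed.

Lemma bal_split h S : balanced h -> \sum_(e in pos S) h e = \sum_(e in neg S) h e.
Proof.
move=> /(_ S); under eq_bigr => e _ do rewrite chi_cut mulrBl.
by rewrite sumrB !sum_ind => /eqP; rewrite subr_eq0 => /eqP.
Qed.

Lemma sum_gt0 (A : {set E}) (F : E -> int) : (exists e, e \in A) ->
  (forall e, e \in A -> 0 < F e) -> 0 < \sum_(e in A) F e.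
Proof.
move=> [e He] HF; rewrite (bigD1 e) //=.
apply: ltr_wpDr; last exact: HF.
by apply: sumr_ge0 => i /andP [Hi _]; apply: ltW; apply: HF.
Qed.

Lemma nonempty_of_sum (A : {set E}) : 0 < \sum_(e in A) w e -> exists e, e \in A.
Proof.
case: (set_0Vmem A) => [->|[e He]]; last by exists e.
by rewrite big_set0 ltxx.
Qed.

Lemma cross S e : e \in pos S :|: neg S ->
  exists p q, [/\ p \in pos S, q \in neg S & ltE q p].
Proof.
move=> He.
have Ew := bal_split S Bw; have Eg := bal_split S Bg.
have [Hp Hn] : (exists p, p \in pos S) /\ (exists q, q \in neg S).
  case/setUP: He => He.
    split; first by exists e.
    apply: nonempty_of_sum; rewrite -Ew; apply: sum_gt0; first by exists e.
    by move=> *; apply: Hw.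
  split; last by exists e.
  apply: nonempty_of_sum; rewrite Ew; apply: sum_gt0; first by exists e.
  by move=> *; apply: Hw.
case: (boolP [exists p, exists q, [&& p \in pos S, q \in neg S & ltE q p]]).
  by case/existsP => p /existsP [q /and3P [H1 H2 H3]]; exists p, q.
rewrite negb_exists => /forallP Hall.
have Hlt : forall p q, p \in pos S -> q \in neg S -> g p * w q < g q * w p.
  move=> p q Hp' Hq'.
  have Hpq : p != q by apply/eqP => Epq; apply: (pos_neg_disj Hp'); rewrite Epq.
  have := Hall p; rewrite negb_exists => /forallP /(_ q); rewrite Hp' Hq' /= => Hn'.
  by have := ltE_total Hpq; rewrite (negbTE Hn') orbF.
pose T := \sum_(p in pos S) \sum_(q in neg S) (g q * w p - g p * w q).
have T0 : T = 0.
  rewrite /T.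
  under eq_bigr => p _ do rewrite sumrB -mulr_suml -mulr_sumr.
  rewrite sumrB -mulr_suml -mulr_sumr Ew Eg.
  by rewrite mulrC subrr.
have Tpos : 0 < T.
  apply: sum_gt0 => // p Hp'; apply: sum_gt0 => // q Hq'.
  by rewrite subr_gt0; apply: Hlt.
by move: Tpos; rewrite T0 ltxx.
Qed.

Definition tripleb (Y : sset E) : bool :=
  [exists e1, exists e2, exists e3, [&& ltE e1 e2, ltE e2 e3 &
    (Y == ([set e1; e3], [set e2])) || (Y == ([set e2], [set e1; e3]))]].

Lemma tripleb_swap Y : tripleb Y -> tripleb (Y.2, Y.1).
Proof.
case/existsP => a /existsP [b /existsP [c /and3P [H1 H2 H3]]].
apply/existsP; exists a; apply/existsP; exists b; apply/existsP; exists c.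
rewrite H1 H2 /=; case/orP: H3 => /eqP -> /=; by rewrite eqxx ?orbT.
Qed.

Lemma mk_triple a b c : ltE a b -> ltE b c ->
  tripleb ([set a; c], [set b]) && tripleb ([set b], [set a; c]).
Proof.
move=> H1 H2; apply/andP; split; apply/existsP; exists a; apply/existsP; exists b;
  apply/existsP; exists c; by rewrite H1 H2 eqxx ?orbT.
Qed.

Lemma sub2 (A : {set E}) a b : a \in A -> b \in A -> [set a; b] \subset A.
Proof. by move=> Ha Hb; apply/subsetP => x; rewrite !inE => /orP [/eqP ->|/eqP ->]. Qed.

Lemma sub1 (A : {set E}) a : a \in A -> [set a] \subset A.
Proof. by move=> Ha; apply/subsetP => x; rewrite inE => /eqP ->. Qed.

Lemma triple_pos S e : e \in pos S ->
  exists Y, [&& tripleb Y, Y.1 \subset pos S, Y.2 \subset neg S & e \in Y.1].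
Proof.
move=> He.
have [p1 [q1 [Hp1 Hq1 L1]]] := cross (S := S) (e := e) ltac:(by rewrite in_setU He).
have [q2 [p2 [Hq2 Hp2 L2]]] := cross (S := ~: S) (e := e)
  ltac:(by rewrite pos_compl neg_compl in_setU He orbT).
rewrite pos_compl in Hq2; rewrite neg_compl in Hp2.
have Heq1 : e != q1 by apply/eqP => E1; apply: (pos_neg_disj He); rewrite E1.
have Heq2 : e != q2 by apply/eqP => E1; apply: (pos_neg_disj He); rewrite E1.
case: (boolP (ltE e q1)) => H1.
  exists ([set e; p1], [set q1]); rewrite /= sub2 // sub1 // !inE eqxx /= andbT.
  by case/andP: (mk_triple H1 L1).
have L1' : ltE q1 e by move: (ltE_total Heq1); rewrite (negbTE H1).
case: (boolP (ltE e q2)) => H2.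
  exists ([set e], [set q1; q2]); rewrite /= sub1 // sub2 // !inE eqxx /= andbT.
  by case/andP: (mk_triple L1' H2).
have L2' : ltE q2 e by move: (ltE_total Heq2); rewrite (negbTE H2).
exists ([set p2; e], [set q2]); rewrite /= sub2 // sub1 // !inE eqxx /= orbT andbT.
by case/andP: (mk_triple L2 L2').
Qed.

Lemma triple_neg S e : e \in neg S ->
  exists Y, [&& tripleb Y, Y.1 \subset pos S, Y.2 \subset neg S & e \in Y.2].
Proof.
rewrite -pos_compl => /triple_pos [Y /and4P [H1 H2 H3 H4]].
exists (Y.2, Y.1); rewrite /= tripleb_swap //.
rewrite pos_compl in H2; rewrite neg_compl in H3. by rewrite H3 H4 pos_compl H2.
Qed.

Lemma scomp_mem (s : seq (sset E)) (P N : {set E}) : [disjoint P & N] ->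
  (forall Y, Y \in s -> (Y.1 \subset P) && (Y.2 \subset N)) ->
  forall x, (x \in (scomp_seq s).1) = has (fun Y : sset E => x \in Y.1) s /\
            (x \in (scomp_seq s).2) = has (fun Y : sset E => x \in Y.2) s.
Proof.
move=> Hd; elim: s => [|Y s IH] Hs x /=.
  by rewrite !inE.
have HY := Hs Y (mem_head _ _); case/andP: HY => HY1 HY2.
have [IH1 IH2] := IH (fun Y' HY' => Hs Y' (ltac:(by rewrite in_cons HY' orbT))) x.
rewrite /scomp /= !inE IH1 IH2; split.
- case Hx: (x \in Y.1) => //=.
  case Hh: (has _ s); last by rewrite andbF.
  case/hasP: Hh => Y' HY' Hx'.
  have /andP [H1 _] := Hs Y' (ltac:(by rewrite in_cons HY' orbT)).
  have xP : x \in P by apply: (subsetP H1).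
  by rewrite andbT; apply/negP => /(subsetP HY2) xN; rewrite (disjointFr Hd xP) in xN.
- case Hx: (x \in Y.2) => //=.
  case Hh: (has _ s); last by rewrite andbF.
  case/hasP: Hh => Y' HY' Hx'.
  have /andP [_ H2] := Hs Y' (ltac:(by rewrite in_cons HY' orbT)).
  have xN : x \in N by apply: (subsetP H2).
  by rewrite andbT; apply/negP => /(subsetP HY1) xP; rewrite (disjointFr Hd xP) in xN.
Qed.

Definition TS S := [set Y : sset E | [&& tripleb Y, Y.1 \subset pos S & Y.2 \subset neg S]].

Lemma pos_neg_disjoint S : [disjoint pos S & neg S].
Proof. rewrite disjoint_subset; apply/subsetP => x H1; rewrite inE; apply/negP => H2. exact: (pos_neg_disj H1 H2). Qed.

Lemma decomp S : scomp_seq (enum (TS S)) = signed_cut d S.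
Proof.
have Hs : forall Y, Y \in enum (TS S) -> (Y.1 \subset pos S) && (Y.2 \subset neg S).
  by move=> Y; rewrite mem_enum inE => /and3P [_ -> ->].
have H := scomp_mem (pos_neg_disjoint S) Hs.
have H1 : (scomp_seq (enum (TS S))).1 = pos S.
  apply/setP => x; rewrite (proj1 (H x)); apply/hasP/idP.
    by case=> Y; rewrite mem_enum inE => /and3P [_ HY _] Hx; apply: (subsetP HY).
  move/triple_pos => [Y /and4P [T1 T2 T3 T4]]; exists Y => //.
  by rewrite mem_enum inE T1 T2 T3.
have H2 : (scomp_seq (enum (TS S))).2 = neg S.
  apply/setP => x; rewrite (proj2 (H x)); apply/hasP/idP.
    by case=> Y; rewrite mem_enum inE => /and3P [_ _ HY] Hx; apply: (subsetP HY).
  move/triple_neg => [Y /and4P [T1 T2 T3 T4]]; exists Y => //.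
  by rewrite mem_enum inE T1 T2 T3.
move: H1 H2; case: (scomp_seq _) => a b /= -> ->.
by rewrite /pos /neg; case: (signed_cut d S).
Qed.

End Order.
Section Final.
Variables w g : E -> int.

Lemma tripleb_circ (lt' : rel E) Y : extends (ltE w g) lt' -> tripleb w g Y -> circ_tot lt' Y.
Proof.
move=> Hext /existsP [a /existsP [b /existsP [c /and3P [H1 H2 H3]]]].
exists a, b, c; split; try exact: Hext.
by case/orP: H3 => /eqP ->; [left|right].
Qed.

Lemma TS_conformal S Y Z : Y \in TS w g S -> Z \in TS w g S -> conformal Y Z.
Proof.
rewrite !inE => /and3P [_ Y1 Y2] /and3P [_ Z1 Z2].
rewrite /conformal (disjointW Y1 Z2 (pos_neg_disjoint S)) /=.
rewrite (disjointW Y2 Z1) // disjoint_sym; exact: pos_neg_disjoint.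
Qed.

Lemma tripleb_two Y : tripleb w g Y ->
  exists a b, [/\ a != b, a \in Y.1 :|: Y.2 & b \in Y.1 :|: Y.2].
Proof.
move=> /existsP [a /existsP [b /existsP [c /and3P [H1 H2 H3]]]].
have Hab : a != b by apply/eqP => Eab; move: H1; rewrite Eab ltE_irr.
exists a, b; split => //; case/orP: H3 => /eqP -> /=; by rewrite !inE eqxx ?orbT.
Qed.

End Final.

Definition touches (e : E) (u : V) := ((val e).1 == u) || ((val e).2 == u).

Lemma touch_star u e : e \in pos (~: [set u]) :|: neg (~: [set u]) -> touches e u.
Proof.
rewrite /pos /neg /signed_cut /touches !inE.
by case/orP => /andP [_]; rewrite negbK => ->; rewrite ?orbT.
Qed.

Lemma touch_two e u v : u != v -> touches e u -> touches e v ->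
  (val e = (u, v)) \/ (val e = (v, u)).
Proof.
rewrite /touches; case: (val e) => a b /= Huv.
case/orP => /eqP Hu; case/orP => /eqP Hv.
- by move: Huv; rewrite -Hu -Hv eqxx.
- by left; rewrite Hu Hv.
- by right; rewrite Hu Hv.
- by move: Huv; rewrite -Hu -Hv eqxx.
Qed.

Lemma two_touch u v e f : u != v -> touches e u -> touches e v ->
  touches f u -> touches f v -> e = f.
Proof.
move=> Huv Heu Hev Hfu Hfv.
have He := touch_two Huv Heu Hev; have Hf := touch_two Huv Hfu Hfv.
case: He Hf => He [] Hf; try by apply: val_inj; rewrite He Hf.
- by move: (valP e) (valP f); rewrite He Hf /= => H1 H2; move: (na H1); rewrite H2.
- by move: (valP e) (valP f); rewrite He Hf /= => H1 H2; move: (na H1); rewrite H2.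
Qed.

Lemma cut_star v : signed_cut d (~: [set v]) = Cstar d v.
Proof.
rewrite /signed_cut /Cstar; congr pair; apply/setP => e; rewrite !inE negbK.
- case: (eqVneq (val e).2 v) => [H2|]; rewrite ?andbF // andbT.
  apply/eqP => H1; move: (valP e); rewrite H1 H2 => H; by move: (nl v); rewrite H.
- case: (eqVneq (val e).1 v) => [H2|]; rewrite ?andbF // andbT.
  apply/eqP => H1; move: (valP e); rewrite H1 H2 => H; by move: (nl v); rewrite H.
Qed.

End Proof.

Theorem lemmal (V : finType) (d : rel V) :
  no_loops d -> no_antiparallel d ->
  totally_cyclic d -> three_edge_connected d ->
  exists (prec : rel (Edge d)) (A : {set sset (Edge d)}),
    strict_partial prec /\ twisted d prec A.
Proof.
move=> nl na tc tec.
have [w [Bw Hw]] := exists_w nl na tc.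
have [g [Bg Hgen]] := generic nl na tec Hw.
exists (ltE w g), (\bigcup_(v : V) TS w g (~: [set v])).
split.
  split; last exact: ltE_trans Hw.
  by move=> e; rewrite ltE_irr.
split => //.
- move=> X /bigcupP [v _]; rewrite inE => /and3P [HX _ _] lt' _ Hext.
  exact: tripleb_circ Hext HX.
- move=> lt' _ Hext X [S [_ _ ->]].
  exists (enum (TS w g S)); split.
  + by move=> Y; rewrite mem_enum inE => /and3P [HY _ _]; apply: tripleb_circ Hext HY.
  + by move=> Y Z; rewrite !mem_enum; apply: TS_conformal.
  + by rewrite (decomp Bw Bg Hw Hgen).
- exists (fun v => TS w g (~: [set v])); split => //.
  + move=> u v Huv; rewrite -setI_eq0; apply/eqP/setP => Y; rewrite !inE.
    apply/negP => /andP [/and3P [HY Y1 Y2] /and3P [_ Z1 Z2]].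
    have [a [b [Hab Ha Hb]]] := tripleb_two HY.
    have sub : forall x, x \in Y.1 :|: Y.2 -> touches x u && touches x v.
      move=> x; rewrite inE => /orP [Hx|Hx]; apply/andP; split; apply: touch_star;
        rewrite inE; by [rewrite (subsetP Y1 _ Hx) | rewrite (subsetP Z1 _ Hx)
                        | rewrite (subsetP Y2 _ Hx) orbT | rewrite (subsetP Z2 _ Hx) orbT].
    case/andP: (sub a Ha) => Hau Hav; case/andP: (sub b Hb) => Hbu Hbv.
    by move/eqP: Hab; apply; apply: (two_touch na Huv).
  + by move=> v Y Z; apply: TS_conformal.
  + by move=> v; rewrite (decomp Bw Bg Hw Hgen) cut_star.
Qed.
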